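(* Let $N=\{1,\dots,n\}$, let $\tilde Q\in\mathbb{R}^{n\times n}$ be symmetric positive definite, $\tilde d\in\mathbb{R}^n$, and $a,b\in\mathbb{R}^n$ with $b\le a$ componentwise. Let $A,B\subseteq N$ be disjoint, $I=N\setminus(A\cup B)$, and let $(x,s,t)$ be the KKT solution for $(A,B)$. Let $C=\{i: x_i<b_i \text{ or } s_i<0\}$, $D=\{i: x_i>a_i \text{ or } t_i>0\}$, and let $(y,u,v)$ be the KKT solution for $(C,D)$. Let $U=\{i\in I: x_i<b_i\}$, $V=\{i\in I: x_i>a_i\}$, $W=U\cup V$, $\overline W=N\setminus W$ and $z=y-x$. Then $$\tilde J(y)-\tilde J(x)=\tfrac12\, z_W^{\top}\tilde Q_W z_W-\tfrac12\, z_{\overline W}^{\top}\tilde Q_{\overline W} z_{\overline W},$$ where $\tilde J(w)=\tfrac12 w^{\top}\tilde Q w+\tilde d^{\top}w$.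
   Context: For disjoint $A_1,A_2\subseteq N$, the KKT solution for $(A_1,A_2)$ is the unique triple $(x,s,t)\in(\mathbb{R}^n)^3$ with $x_{A_1}=b_{A_1}$, $x_{A_2}=a_{A_2}$, $s_i=0$ for $i\notin A_1$, $t_i=0$ for $i\notin A_2$, and $\tilde Qx+\tilde d+s+t=0$ (unique since $\tilde Q\succ0$). The sets $C$ and $D$ defined in the claim are disjoint. For $M\subseteq N$, $z_M$ denotes the subvector of $z$ indexed by $M$ and $\tilde Q_M$ the principal submatrix of $\tilde Q$ indexed by $M$. *)

(* Defs.v *)
From HB Require Import structures.
From mathcomp Require Import all_boot all_order all_algebra.
Set Implicit Arguments. Unset Strict Implicit. Unset Printing Implicit Defensive.
Import Order.TTheory GRing.Theory Num.Theory.
Local Open Scope ring_scope.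

Definition symmetric_mx (R : pzRingType) (n : nat) (Q : 'M[R]_n) : Prop := Q^T = Q.

Definition posdef_mx (R : realFieldType) (n : nat) (Q : 'M[R]_n) : Prop :=
  forall w : 'cV[R]_n, w != 0 -> 0 < (w^T *m Q *m w) 0 0.

(* (x,s,t) is the KKT solution for the disjoint pair (A1,A2):
   x_{A1} = b_{A1}, x_{A2} = a_{A2}, s_i = 0 off A1, t_i = 0 off A2,
   Q x + d + s + t = 0. (Unique since Q is positive definite.) *)
Definition is_KKT_solution (R : realFieldType) (n : nat) (Q : 'M[R]_n)
    (d a b : 'cV[R]_n) (A1 A2 : {set 'I_n}) (x s t : 'cV[R]_n) : Prop :=
  [/\ forall i, i \in A1 -> x i 0 = b i 0,
      forall i, i \in A2 -> x i 0 = a i 0,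
      forall i, i \notin A1 -> s i 0 = 0,
      forall i, i \notin A2 -> t i 0 = 0
    & Q *m x + d + s + t = 0].

Definition Jfun (R : realFieldType) (n : nat) (Q : 'M[R]_n) (d w : 'cV[R]_n) : R :=
  2^-1 * (w^T *m Q *m w) 0 0 + (d^T *m w) 0 0.

Definition subquad (R : realFieldType) (n : nat) (Q : 'M[R]_n) (M : {set 'I_n})
    (z : 'cV[R]_n) : R :=
  \sum_(i in M) \sum_(j in M) z i 0 * Q i j * z j 0.

(* Main.v *)
Require Import Defs.
From HB Require Import structures.
From mathcomp Require Import all_boot all_order all_algebra.
From mathcomp Require Import ring lra.
Import Order.TTheory GRing.Theory Num.Theory.
Local Open Scope ring_scope.

Section Aux.
Variable R : realFieldType.
Variable n : nat.

Lemma sum_split (M : {set 'I_n}) (f : 'I_n -> R) :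
  \sum_i f i = \sum_(i in M) f i + \sum_(i in ~: M) f i.
Proof.
rewrite (bigID (fun i => i \in M)) /=; congr (_ + _).
by apply: eq_bigl => i; rewrite in_setC.
Qed.

Lemma lin (z w : 'cV[R]_n) : (z^T *m w) 0 0 = \sum_i z i 0 * w i 0.
Proof. by rewrite mxE; apply: eq_bigr => i _; rewrite mxE. Qed.

Lemma quad_swap (Q : 'M[R]_n) (x z : 'cV[R]_n) : Q^T = Q ->
  (x^T *m Q *m z) 0 0 = (z^T *m (Q *m x)) 0 0.
Proof.
move=> sQ.
have -> : (x^T *m Q *m z) 0 0 = ((x^T *m Q *m z)^T) 0 0 by rewrite [RHS]mxE.
by rewrite !trmx_mul trmxK sQ.
Qed.

Lemma cross (Q : 'M[R]_n) (M : {set 'I_n}) (z : 'cV[R]_n) : Q^T = Q ->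
  \sum_(i in M) \sum_(j in ~: M) z i 0 * Q i j * z j 0 =
  \sum_(i in ~: M) \sum_(j in M) z i 0 * Q i j * z j 0.
Proof.
move=> sQ; rewrite exchange_big /=; apply: eq_bigr => i _; apply: eq_bigr => j _.
have -> : Q j i = Q i j by rewrite -{1}sQ mxE.
ring.
Qed.

Lemma gsum (Q : 'M[R]_n) (M : {set 'I_n}) (z : 'cV[R]_n) :
  \sum_(i in M) z i 0 * (Q *m z) i 0 =
  \sum_(i in M) \sum_(j in M) z i 0 * Q i j * z j 0 +
  \sum_(i in M) \sum_(j in ~: M) z i 0 * Q i j * z j 0.
Proof.
rewrite -big_split; apply: eq_bigr => i _ /=.
rewrite mxE big_distrr /= (sum_split M); congr (_ + _);
  by apply: eq_bigr => j _; rewrite mulrA.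
Qed.

Lemma eD (A B : 'M[R]_(1,1)) : (A + B) 0 0 = A 0 0 + B 0 0.
Proof. by rewrite mxE. Qed.

End Aux.

Theorem mainTheorem1 (R : realFieldType) (n : nat) (Q : 'M[R]_n)
    (d a b : 'cV[R]_n) (A B : {set 'I_n}) (x s t y u v : 'cV[R]_n) :
  symmetric_mx Q -> posdef_mx Q ->
  (forall i, b i 0 <= a i 0) ->
  [disjoint A & B] ->
  is_KKT_solution Q d a b A B x s t ->
  let I := ~: (A :|: B) in
  let C := [set i | (x i 0 < b i 0) || (s i 0 < 0)] in
  let D := [set i | (x i 0 > a i 0) || (t i 0 > 0)] in
  is_KKT_solution Q d a b C D y u v ->
  let U := [set i in I | x i 0 < b i 0] in
  let V := [set i in I | x i 0 > a i 0] in
  let W := U :|: V in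
  let Wbar := ~: W in
  let z := y - x in
  Jfun Q d y - Jfun Q d x = 2^-1 * subquad Q W z - 2^-1 * subquad Q Wbar z.
Proof.
move=> sQ _ hba _ [xA xB sA tB kx] I C D [yC yD uC vD ky] U V W Wbar z.
have hQx : Q *m x = - (d + s + t) by apply/eqP; rewrite -addr_eq0 !addrA kx.
have hQy : Q *m y = - (d + u + v) by apply/eqP; rewrite -addr_eq0 !addrA ky.
have hQz : forall i, (Q *m z) i 0 = s i 0 + t i 0 - u i 0 - v i 0.
  move=> i; rewrite /z mulmxBr hQy hQx !mxE; ring.
have hz : forall i, z i 0 = y i 0 - x i 0 by move=> i; rewrite !mxE.
have hy : y = x + z by rewrite /z addrC subrK.
clearbody z.
have hW : forall i, i \in W -> s i 0 = 0 /\ t i 0 = 0.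
  move=> i; rewrite !inE negb_or => hi.
  have [hA hB] : i \notin A /\ i \notin B.
    by case/orP: hi => /andP [] /andP [].
  by split; [rewrite sA | rewrite tB].
have hWb : forall i, i \in Wbar -> z i 0 * (u i 0 + v i 0) = 0.
  move=> i; rewrite /Wbar in_setC => hnW.
  have hC : i \in C -> z i 0 = 0.
    move=> hiC; rewrite hz (yC _ hiC).
    case hiA: (i \in A); first by rewrite (xA _ hiA) subrr.
    move: hiC; rewrite inE (sA i (negbT hiA)) ltxx orbF => hxb.
    case hiB: (i \in B).
      by move: hxb; rewrite (xB _ hiB) => hab; have := hba i; lra.
    move: hnW; rewrite !inE hiA hiB hxb /=.
    done.
  have hD : i \in D -> z i 0 = 0.
    move=> hiD; rewrite hz (yD _ hiD).
    case hiB: (i \in B); first by rewrite (xB _ hiB) subrr.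
    move: hiD; rewrite inE (tB i (negbT hiB)) ltxx orbF => hxa.
    case hiA: (i \in A).
      by move: hxa; rewrite (xA _ hiA) => hab; have := hba i; lra.
    move: hnW; rewrite !inE hiA hiB hxa /= orbT.
    done.
  case hiC: (i \in C); first by rewrite hC // mul0r.
  case hiD: (i \in D); first by rewrite hD // mul0r.
  by rewrite (uC _ (negbT hiC)) (vD _ (negbT hiD)) addr0 mulr0.
have H1 : (z^T *m (Q *m x)) 0 0 =
   - \sum_i d i 0 * z i 0 - \sum_i z i 0 * (s i 0 + t i 0).
  rewrite lin hQx -sumrN -sumrB; apply: eq_bigr => i _; rewrite !mxE; ring.
have H2 : (d^T *m y) 0 0 - (d^T *m x) 0 0 = \sum_i d i 0 * z i 0.
  rewrite !lin -sumrB; apply: eq_bigr => i _; rewrite hz; ring.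
have H3 : (z^T *m Q *m z) 0 0 = \sum_(i in W) z i 0 * (Q *m z) i 0
     + \sum_(i in Wbar) z i 0 * (Q *m z) i 0.
  by rewrite -mulmxA lin (@sum_split R n W).
have H4 := @gsum R n Q W z.
have H5 := @gsum R n Q Wbar z.
have H6 := @cross R n Q W z sQ.
have H7 : \sum_i z i 0 * (s i 0 + t i 0) = \sum_(i in Wbar) z i 0 * (Q *m z) i 0.
  rewrite (@sum_split R n W) big1 ?add0r; last first.
    by move=> i /hW [-> ->]; rewrite addr0 mulr0.
  apply: eq_bigr => i hi; rewrite hQz.
  have e := hWb i hi.
  transitivity (z i 0 * (s i 0 + t i 0) - z i 0 * (u i 0 + v i 0)).
    by rewrite e subr0.
  ring.
rewrite /Jfun /subquad.
have ex : (y^T *m Q *m y) 0 0 = (x^T *m Q *m x) 0 0 + 2 * (z^T *m (Q *m x)) 0 0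
          + (z^T *m Q *m z) 0 0.
  have tD : (x + z)^T = x^T + z^T by apply/matrixP => i j; rewrite !mxE.
  rewrite hy tD !mulmxDl !mulmxDr !eD (@quad_swap R n Q x z) //.
  rewrite -(mulmxA z^T Q x); ring.
move: H5; rewrite /Wbar setCK => H5.
rewrite ex.
move: H1 H2 H3 H4 H5 H6 H7; rewrite /Wbar.
set T1 := (z^T *m (Q *m x)) 0 0.
lra.
Qed.
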